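(* Let $p$ be a prime. If $B\subset\mathbf{Z}/p\mathbf{Z}$ is balanced, then $|B|\geqslant\log_2 p+1$.
   Context: A subset $B$ of an abelian group is balanced if for every $b\in B$ there exist distinct $b_1,b_2\in B$ with $2b=b_1+b_2$. *)

(* Defs.v *)
From mathcomp Require Import all_boot all_algebra.
From Stdlib Require Import Reals.
Set Implicit Arguments. Unset Strict Implicit. Unset Printing Implicit Defensive.
Import GRing.Theory.
Local Open Scope ring_scope.

Definition balanced (G : finZmodType) (B : {set G}) : Prop :=
  forall b, b \in B -> exists b1, exists b2,
    [/\ b1 \in B, b2 \in B, b1 != b2 & b *+ 2 = b1 + b2].

Definition log2 (x : R) : R := (ln x / ln 2)%R.

(* Main.v *)
Require Import Defs.
From mathcomp Require Import all_boot all_algebra.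
From Stdlib Require Import Reals.
From Stdlib Require Import Lra.

Lemma INR_exp2 k : INR (expn 2 k) = (2 ^ k)%R.
Proof.
elim: k => [|k IH]; first by simpl; lra.
rewrite expnS mulnE mult_INR IH /=; lra.
Qed.

Lemma real_part (p k b : nat) : (p <= expn 2 k)%N -> (k.+1 <= b)%N -> (0 < p)%N ->
  (log2 (INR p) + 1 <= INR b)%R.
Proof.
move=> /leP hp /leP hb /ltP p0.
have l2 : (0 < ln 2)%R by rewrite -ln_1; apply: ln_increasing; lra.
have Hp : (0 < INR p)%R by apply: lt_0_INR.
have H1 : (ln (INR p) <= INR k * ln 2)%R.
  rewrite -ln_pow; last lra.
  have h : (INR p <= 2 ^ k)%R by rewrite -INR_exp2; exact: le_INR.
  case: (Rle_lt_or_eq_dec _ _ h) => [lt|->]; [left; exact: ln_increasing | right => //].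
have H2 : (log2 (INR p) <= INR k)%R.
  rewrite /log2 /Rdiv.
  have : (ln (INR p) * / ln 2 <= INR k * ln 2 * / ln 2)%R.
    apply: Rmult_le_compat_r => //; left; exact: Rinv_0_lt_compat.
  rewrite Rmult_assoc Rinv_r ?Rmult_1_r //; lra.
have H3 : (INR k.+1 <= INR b)%R by apply: le_INR.
rewrite S_INR in H3; lra.
Qed.

From mathcomp Require Import all_order.
From mathcomp Require Import ring lra zify.

Section Aux.
Set Implicit Arguments. Unset Strict Implicit. Unset Printing Implicit Defensive.
Import Order.TTheory GRing.Theory Num.Theory.
Local Open Scope ring_scope.

Lemma schur1 (R : fieldType) n (c : R) (Q : 'M_(1,n)) (Rr : 'M_(n,1)) (S : 'M_n) : c != 0 ->
  \det (block_mx c%:M Q Rr S) = c * \det (S - c^-1 *: (Rr *m Q)).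
Proof.
move=> c0.
have -> : block_mx c%:M Q Rr S = block_mx 1%:M 0 (c^-1 *: Rr) 1%:M *m block_mx c%:M Q 0 (S - c^-1 *: (Rr *m Q)).
  rewrite mulmx_block !mul1mx !mul0mx !addr0 mul_mx_scalar scalerA mulfV // scale1r.
  by rewrite -scalemxAl addrC subrK.
by rewrite det_mulmx det_lblock det_ublock !det1 !mul1r det_scalar1.
Qed.

Lemma det_step (R : realFieldType) n
  (IH : forall A : 'M[R]_n, (forall i j, 0 <= A i j) -> (forall i, \sum_j A i j <= 1) ->
    0 <= \det (1%:M - A) <= 1)
  (A : 'M[R]_(1 + n)) (Ap : forall i j, 0 <= A i j) (As : forall i, \sum_j A i j <= 1) :
  0 <= \det (1%:M - A) <= 1.
Proof.
have Ab : A = block_mx (ulsubmx A) (ursubmx A) (dlsubmx A) (drsubmx A) by rewrite submxK.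
set a := A 0 0.
have ua : ulsubmx A = a%:M.
  rewrite [LHS]mx11_scalar !mxE /a; congr (_%:M); congr (A _ _); exact/val_inj.
set u := ursubmx A. set v := dlsubmx A. set D := drsubmx A.
have EM : 1%:M - A = block_mx (1 - a)%:M (- u) (- v) (1%:M - D).
  rewrite [in LHS]Ab ua (scalar_mx_block 1 n 1) opp_block_mx add_block_mx.
  by rewrite !sub0r raddfB.
have row0 : a + \sum_j u 0 j <= 1.
  have := As 0; rewrite big_split_ord big_ord1 /=.
  have -> : (lshift n (0 : 'I_1)) = 0 by apply/val_inj.
  congr (_ + _ <= _); apply: eq_bigr => j _; rewrite !mxE; by have -> : lshift n (0:'I_1) = 0 by exact/val_inj.
have rowi : forall i, v i 0 + \sum_j D i j <= 1.
  move=> i; have := As (rshift 1 i); rewrite big_split_ord big_ord1 /=.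
  have e1 : v i 0 = A (rshift 1 i) (lshift n 0) by rewrite !mxE.
  have e2 : \sum_j D i j = \sum_j A (rshift 1 i) (rshift 1 j) by apply: eq_bigr => j _; rewrite !mxE.
  by rewrite e1 e2.
have up : forall j, 0 <= u 0 j by move=> j; rewrite !mxE; apply: Ap.
have vp : forall i, 0 <= v i 0 by move=> i; rewrite !mxE; apply: Ap.
have Dp : forall i j, 0 <= D i j by move=> i j; rewrite !mxE; apply: Ap.
have a0 : 0 <= a by apply: Ap.
have su0 : 0 <= \sum_j u 0 j by apply: sumr_ge0 => j _; apply: up.
have a1 : a <= 1 by lra.
rewrite EM.
have [a_eq1|a_lt1] := eqVneq a 1.
  have u0 : - u = 0.
    apply/matrixP => i j; rewrite [LHS]mxE [RHS]mxE (ord1 i).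
    have : \sum_k u 0 k = 0 by lra.
    move/eqP; rewrite psumr_eq0; last by move=> k _; exact: up.
    by move/allP/(_ j (mem_index_enum _)) => /= /eqP ->; rewrite oppr0.
  by rewrite u0 det_lblock a_eq1 subrr det_scalar1 mul0r lexx ler01.
have c0 : 1 - a != 0 by rewrite subr_eq0 eq_sym.
have cp : 0 < 1 - a by rewrite lt_neqAle eq_sym c0 /= subr_ge0.
rewrite schur1 //.
have -> : 1%:M - D - (1 - a)^-1 *: (- v *m - u) = 1%:M - (D + (1 - a)^-1 *: (v *m u)).
  by rewrite mulNmx mulmxN opprK opprD addrA.
set A' := D + _.
have A'E : forall i j, A' i j = D i j + (1 - a)^-1 * (v i 0 * u 0 j).
  by move=> i j; rewrite !mxE big_ord1 !mxE.
have /andP [h1 h2] : 0 <= \det (1%:M - A') <= 1.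
  apply: IH => [i j|i].
    by rewrite A'E addr_ge0 // mulr_ge0 ?invr_ge0 ?mulr_ge0 // ltW.
  under eq_bigr do rewrite A'E.
  rewrite big_split /= -mulr_sumr -mulr_sumr.
  have := rowi i.
  have : (1 - a)^-1 * (v i 0 * \sum_j u 0 j) <= v i 0.
    rewrite -(ler_pM2l cp) mulrA mulfV // mul1r [X in _ <= X]mulrC ler_wpM2l //; lra.
  move=> H1 H2; lra.
apply/andP; split; first by rewrite mulr_ge0 // ltW.
have c1 : 1 - a <= 1 by lra.
by rewrite mulr_ile1 // ltW.
Qed.

Lemma det_substoch (R : realFieldType) n (A : 'M[R]_n) :
  (forall i j, 0 <= A i j) -> (forall i, \sum_j A i j <= 1) ->
  0 <= \det (1%:M - A) <= 1.
Proof.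
elim: n A => [|n IH] A Ap As; first by rewrite det_mx00 ler01 lexx.
exact: det_step.
Qed.

Lemma sum_delta (R : pzRingType) (I : finType) (a : I) (y : I -> R) :
  \sum_c (a == c)%:R * y c = y a.
Proof.
rewrite (bigD1 a) //= eqxx mul1r big1 ?addr0 // => c.
by rewrite eq_sym => /negbTE ->; rewrite mul0r.
Qed.

Lemma sum_delta1 (R : pzRingType) (I : finType) (a : I) :
  \sum_c (a == c)%:R = 1 :> R.
Proof.
rewrite (bigD1 a) //= eqxx big1 ?addr0 // => c.
by rewrite eq_sym => /negbTE ->.
Qed.

Lemma sum_delta' (R : pzRingType) (I : finType) (a : I) (y : I -> R) :
  \sum_c y c * (a == c)%:R = y a.
Proof.
rewrite (bigD1 a) //= eqxx mulr1 big1 ?addr0 // => c.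
by rewrite eq_sym => /negbTE ->; rewrite mulr0.
Qed.

Lemma sum_delta1' (R : pzRingType) (I : finType) (a : I) (y : I -> R) :
  \sum_c (a == c)%:R * y c = y a.
Proof. exact: sum_delta. Qed.

Lemma key (p : nat) (B : {set 'Z_p}) : prime p -> B != set0 -> balanced B ->
  exists k, (p <= expn 2 k)%nat /\ (k.+1 <= #|B|)%nat.
Proof.
move=> pp Bn0 Bbal.
have p1 : (1 < p)%nat by apply: prime_gt1.
pose G := 'Z_p.
pose cond (b : G) (x : G * G) := [&& x.1 \in B, x.2 \in B, x.1 != x.2 & b *+ 2 == x.1 + x.2].
pose g (b : G) := odflt (b, b) [pick x | cond b x].
pose f1 b := (g b).1. pose f2 b := (g b).2.
have gP : forall b, b \in B -> [/\ f1 b \in B, f2 b \in B, f1 b != f2 b & b *+ 2 = f1 b + f2 b].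
  move=> b bB; rewrite /f1 /f2 /g; case: pickP => [x /and4P [h1 h2 h3 /eqP h4] | H] //=.
  have [b1 [b2 [h1 h2 h3 h4]]] := Bbal b bB.
  by move: (H (b1, b2)); rewrite /cond /= h1 h2 h3 /= => /negbT/eqP; case.
pose closed (X : {set G}) := [forall b in X, (f1 b \in X) && (f2 b \in X)].
pose P (X : {set G}) := [&& X \subset B, X != set0 & closed X].
have PB : P B.
  rewrite /P subxx Bn0 /=; apply/forall_inP => b bB.
  by have [-> -> _ _] := gP b bB.
case: (@arg_minnP _ B P (fun X : {set G} => #|X|) PB) => C /and3P [CB Cn0 /forall_inP Ccl] Cmin.
have [r rC] : exists r, r \in C by apply/set0Pn.
pose S := C :\ r.
have CS : #|C| = #|S|.+1 by rewrite (cardsD1 r C) rC.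
have SC : S \subset C by apply: subD1set.
have inSC : forall b, b \in S -> b \in C by move=> b; apply: (subsetP SC).
have fC : forall b, b \in C -> f1 b \in C /\ f2 b \in C by move=> b /Ccl /andP.
have gC : forall b, b \in C -> [/\ f1 b != f2 b & b *+ 2 = f1 b + f2 b].
  by move=> b /(subsetP CB) /gP [_ _ ? ?].
have [s sC sr] : exists2 s, s \in C & s != r.
  have [h1 h2] := gC r rC; have [c1 c2] := fC r rC.
  case: (eqVneq (f1 r) r) => [e|ne]; last by exists (f1 r).
  by exists (f2 r) => //; rewrite -{2}e eq_sym.
pose N := (Zp_trunc p).+2.
pose Mg (R : comPzRingType) : 'M[R]_N := \matrix_(b, c)
  (if b \in S then (b == c)%:R *+ 2 - (f1 b == c)%:R - (f2 b == c)%:R else (b == c)%:R).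
pose A : 'M[rat]_N := \matrix_(b, c)
  (if b \in S then ((f1 b == c)%:R + (f2 b == c)%:R) / 2 else 0).
pose d : 'rV[rat]_N := \row_b (if b \in S then 2 else 1).
have MA : Mg _ = diag_mx d *m (1%:M - A).
  apply/matrixP => b c; rewrite mul_diag_mx !mxE.
  case: (b \in S); rewrite ?mul1r ?subr0 //.
  rewrite mulr2n; lra.
have Ap : forall i j, 0 <= A i j.
  move=> i j; rewrite mxE; case: (i \in S) => //.
  by rewrite divr_ge0 // addr_ge0 // ler0n.
have As : forall i, \sum_j A i j <= 1.
  move=> i; case iS: (i \in S).
    under eq_bigr do rewrite mxE iS.
    rewrite -mulr_suml big_split /= !sum_delta1; lra.
  by rewrite big1 // => j _; rewrite mxE iS.
have /andP [dA0 dA1] := det_substoch Ap As.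
have detM : \det (Mg _) = 2 ^+ #|S| * \det (1%:M - A).
  rewrite MA det_mulmx det_diag; congr (_ * _).
  rewrite (eq_bigr (fun i => if i \in S then 2 else 1)); last by move=> i _; rewrite mxE.
  by rewrite -big_mkcond prodr_const.
have detA0 : \det (1%:M - A) != 0.
  apply/negP; rewrite -det_tr => /det0P [v v0 hv].
  have hvb : forall b, v 0 b = \sum_c A b c * v 0 c.
    move=> b; have := congr1 (fun M : 'rV_N => M 0 b) hv; rewrite !mxE.
    have e : forall j, (1%:M - A)^T j b = (b == j)%:R - A b j by move=> j; rewrite /A !mxE.
    under eq_bigr do rewrite e mulrBr.
    rewrite sumrB sum_delta' => /eqP; rewrite subr_eq0 => /eqP ->.
    by apply: eq_bigr => c _; rewrite mulrC.
  have hvS : forall b, b \in S -> v 0 b *+ 2 = v 0 (f1 b) + v 0 (f2 b).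
    move=> b bS; rewrite hvb.
    under eq_bigr do rewrite mxE bS mulrAC mulrDl.
    rewrite -mulr_suml big_split /= !sum_delta1'.
    rewrite mulr2n; lra.
  have hvN : forall b, b \notin S -> v 0 b = 0.
    by move=> b bS; rewrite hvb big1 // => c _; rewrite mxE (negbTE bS) mul0r.
  have [j vj] : exists j, v 0 j != 0.
    case: (pickP (fun j => v 0 j != 0)) => [j vj | H]; first by exists j.
    by case/eqP: v0; apply/rowP => j; move/negbFE: (H j) => /eqP ->; rewrite mxE.
  case: (@arg_maxP _ _ _ r xpredT (fun b => `|v 0 b|) isT) => b0 _ b0max.
  pose m := `|v 0 b0|.
  have mle : forall b, `|v 0 b| <= m by move=> b; exact: b0max.
  have m0 : 0 < m by apply: lt_le_trans (mle j); rewrite normr_gt0.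
  pose T := [set b | `|v 0 b| == m].
  have TS : forall b, b \in T -> b \in S.
    move=> b; rewrite inE; apply: contraLR => /hvN ->; rewrite normr0 eq_sym.
    by rewrite lt0r_neq0.
  have Tcl : forall b, b \in T -> (f1 b \in T) && (f2 b \in T).
    move=> b bT; have bS := TS b bT; move: bT; rewrite !inE => /eqP bm.
    have := hvS b bS; move/(congr1 (fun x => `|x|)); rewrite normrMn bm.
    have := ler_normD (v 0 (f1 b)) (v 0 (f2 b)).
    have := mle (f1 b); have := mle (f2 b).
    move=> h1 h2 h3 h4.
    have h5 : m *+ 2 <= `|v 0 (f1 b)| + `|v 0 (f2 b)| by rewrite h4.
    rewrite mulr2n in h5.
    by apply/andP; split; rewrite eq_le mle /=; lra.
  have PT : P T.
    rewrite /P; apply/and3P; split.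
    - apply/subsetP => b /TS /inSC; exact: (subsetP CB).
    - by apply/set0Pn; exists b0; rewrite inE.
    - by apply/forall_inP.
  have h := Cmin T PT.
  have h2 : (#|T| <= #|S|)%nat by apply/subset_leq_card/subsetP.
  rewrite CS in h; by move: (leq_trans h h2); rewrite ltnn.
pose Dz := \det (Mg int).
have mapM : forall R : comPzRingType, map_mx intr (Mg int) = Mg R.
  move=> R; apply/matrixP => b c; rewrite !mxE.
  case: (b \in S); by rewrite ?rmorphB ?rmorphMn ?rmorph_nat.
have detR : forall R : comPzRingType, \det (Mg R) = Dz%:~R.
  by move=> R; rewrite -mapM det_map_mx.
pose y : 'cV['Z_p]_N := \col_c (if c \in C then c - r else 0).
have My : Mg 'Z_p *m y = 0.
  apply/matrixP => b j; rewrite (ord1 j) !mxE.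
  case bS: (b \in S).
    under eq_bigr do rewrite /Mg /y !mxE bS mulrBl mulrBl [(_ *+ 2) * _]mulrnAl.
    rewrite !sumrB sumrMnl !sum_delta1'.
    have bC := inSC b bS; have [c1 c2] := fC b bC; have [_ h4] := gC b bC.
    rewrite bC c1 c2 mulrnBl h4; ring.
  under eq_bigr do rewrite /Mg /y !mxE bS.
  rewrite sum_delta1'.
  move: bS; rewrite !inE; case: (b \in C); rewrite ?andbT //.
  by move/negbFE/eqP ->; rewrite subrr.
have Dy : (Dz%:~R : 'Z_p) * (s - r) = 0.
  have := congr1 (mulmx (\adj (Mg 'Z_p))) My.
  rewrite mulmxA mul_adj_mx mul_scalar_mx mulmx0 detR => /matrixP /(_ s 0).
  by rewrite !mxE sC.
have Dq : (Dz%:~R : rat) = 2 ^+ #|S| * \det (1%:M - A) by rewrite -detR detM.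
have Dpos : (0 < Dz%:~R :> rat).
  by rewrite Dq mulr_gt0 // ?exprn_gt0 // lt_neqAle eq_sym detA0 dA0.
have Dle : (Dz%:~R <= 2 ^+ #|S| :> rat).
  by rewrite Dq -[X in _ <= X]mulr1 ler_wpM2l // exprn_ge0.
have [m Dm] : exists m : nat, Dz = m%:Z.
  by exists (absz Dz); rewrite gez0_abs // ltW // -(ltr0z rat).
rewrite Dm in Dy Dpos Dle. rewrite -!pmulrn in Dy Dpos Dle.
rewrite ltr0n in Dpos.
rewrite -natrX ler_nat in Dle.
exists #|S|; split; last by rewrite -CS; exact: subset_leq_card CB.
apply: leq_trans Dle.
pose t : 'Z_p := s - r.
have nP : (0 < val t < p)%nat.
  have lt : (val t < p)%nat by apply: (leq_trans (ltn_ord _)); rewrite Zp_cast.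
  rewrite lt andbT lt0n.
  apply/negP => /eqP h; move: sr; rewrite -subr_eq0.
  by have -> : s - r = 0 by apply/val_inj; rewrite -/t h.
move: Dy; rewrite -/t -[t]natr_Zp -natrM => Dy.
have := congr1 (@nat_of_ord _) Dy; rewrite val_Zp_nat //= => h.
have : (p %| m * val t)%nat by rewrite /dvdn h.
rewrite Euclid_dvdM //.
case/orP => [|hn]; first by apply: dvdn_leq.
by case/andP: nP => n0 np; move: hn; rewrite gtnNdvd.
Qed.

End Aux.

Theorem corollary4p4 (p : nat) (B : {set 'Z_p}) :
  prime p -> B != set0 -> balanced B ->
  (log2 (INR p) + 1 <= INR #|B|)%R.
Proof.
move=> pp Bn0 Bbal; have [k [h1 h2]] := key pp Bn0 Bbal.
apply: real_part h1 h2 _; exact: prime_gt0.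
Qed.
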